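(* Let $\{p_{(R,\alpha)}(\mathbf{x})\}_{(R,\alpha)}$ be a replacement rule satisfying the Fixation Axiom and Assumptions 1, 3 and 4. Then for every state $\mathbf{x}\in\{0,1\}^G$, $$\hat\Delta_{\mathrm{sel}}(\mathbf{x})=\sum_{i\in I}X_i\big(W_i(\mathbf{x})-V_i\big).$$
   Context: $G$ is a finite nonempty set of genetic sites, $n=|G|$, partitioned into sets $G_i$ ($i\in I$, the individuals), $n_i=|G_i|$; $g\sim h$ means $g,h\in G_i$ for some $i$. A state is $\mathbf{x}\in\{0,1\}^G$; $\mathbf{a}$ is the all-zero and $\mathbf{A}$ the all-one state. A replacement event is $(R,\alpha)$ with $R\subseteq G$, $\alpha:R\to G$; a replacement rule gives for each state a probability distribution $\{p_{(R,\alpha)}(\mathbf{x})\}$ over events. Fixation Axiom: there exist $g\in G$, $m\ge1$, events $(R_k,\alpha_k)_{k=1}^m$ with $p_{(R_k,\alpha_k)}(\mathbf{x})>0$ for all $k,\mathbf{x}$, $g\in R_k$ for some $k$, and $\tilde\alpha_1\circ\cdots\circ\tilde\alpha_m(h)=g$ for all $h$, where $\tilde\alpha_k$ equals $\alpha_k$ on $R_k$ and the identity elsewhere. $e_{gh}(\mathbf{x})=\sum_{(R,\alpha):h\in R,\alpha(h)=g}p_{(R,\alpha)}(\mathbf{x})$, $d_g(\mathbf{x})=\sum_he_{hg}(\mathbf{x})$. Assumption 1: $p_{(R,\alpha)}(\mathbf{A})=p_{(R,\alpha)}(\mathbf{a})$ for all events; $e^\circ_{gh},d^\circ_g$ denote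 values in these states. Reproductive values: the unique $(v_g)$ with $d^\circ_gv_g=\sum_he^\circ_{gh}v_h$ for all $g$ and $\sum_gv_g=n$. $\hat b_g(\mathbf{x})=\sum_he_{gh}(\mathbf{x})v_h$, $\hat d_g(\mathbf{x})=v_gd_g(\mathbf{x})$, fitness $w_g(\mathbf{x})=v_g-\hat d_g(\mathbf{x})+\hat b_g(\mathbf{x})$, $\hat\Delta_{\mathrm{sel}}(\mathbf{x})=\sum_gx_g(\hat b_g(\mathbf{x})-\hat d_g(\mathbf{x}))$. Individual quantities: $X_i=\frac1{n_i}\sum_{g\in G_i}x_g$, $V_i=\sum_{g\in G_i}v_g$, $W_i(\mathbf{x})=\sum_{g\in G_i}w_g(\mathbf{x})$. Assumption 3 (coherence of individuals): if $g\sim h$, then for each state $\mathbf{x}$ and each event $(R,\alpha)$ with $p_{(R,\alpha)}(\mathbf{x})>0$, either $g,h\in R$ or $g,h\notin R$. Assumption 4 (fair meiosis): if $(R,\alpha_1)$, $(R,\alpha_2)$ are events with the same $R$ and $\alpha_1(g)\sim\alpha_2(g)$ for all $g\in R$, then $p_{(R,\alpha_1)}(\mathbf{x})=p_{(R,\alpha_2)}(\mathbf{x})$ for every state $\mathbf{x}$. *)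

(* Defs.v *)
From HB Require Import structures.
From mathcomp Require Import all_boot all_order all_algebra.
Set Implicit Arguments. Unset Strict Implicit. Unset Printing Implicit Defensive.
Import Order.TTheory GRing.Theory Num.Theory.
Local Open Scope ring_scope.

Section Defs.
Variables (R : realFieldType) (G I : finType).

Definition state := {ffun G -> bool}.

(* A replacement event (R, alpha) with R a subset of G and alpha : R -> G is
   encoded bijectively as a finite function a : G -> option G, where
   R = {g | a g <> None} and alpha g = y iff a g = Some y. *)
Definition event := {ffun G -> option G}.

Definition in_R (e : event) (g : G) : bool := e g != None.

Definition rule := state -> event -> R.

Definition is_replacement_rule (p : rule) : Prop :=
  (forall x e, 0 <= p x e) /\ (forall x, \sum_(e : event) p x e = 1).

Definition ext_map (e : event) (h : G) : G := odflt h (e h).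

Definition comp_events (s : seq event) : G -> G :=
  foldr (fun e f => ext_map e \o f) id s.

Definition fixation_axiom (p : rule) : Prop :=
  exists (g : G) (s : seq event),
    [/\ (1 <= size s)%N,
        (forall e, e \in s -> forall x, 0 < p x e),
        (exists2 e, e \in s & in_R e g) &
        (forall h, comp_events s h = g)].

(* e_{gh}(x): probability that h is replaced by offspring of g *)
Definition e_rate (p : rule) (x : state) (g h : G) : R :=
  \sum_(e : event | e h == Some g) p x e.

Definition d_rate (p : rule) (x : state) (g : G) : R :=
  \sum_(h : G) e_rate p x h g.

Definition stateA : state := [ffun=> true].
Definition statea : state := [ffun=> false].

Definition assumption1 (p : rule) : Prop :=
  forall e, p stateA e = p statea e.

Definition e0 (p : rule) (g h : G) : R := e_rate p statea g h.
Definition d0 (p : rule) (g : G) : R := d_rate p statea g.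

Definition reproductive_values (p : rule) (v : G -> R) : Prop :=
  (forall g, d0 p g * v g = \sum_(h : G) e0 p g h * v h) /\
  \sum_(g : G) v g = #|G|%:R.

Definition bhat (p : rule) (v : G -> R) (x : state) (g : G) : R :=
  \sum_(h : G) e_rate p x g h * v h.
Definition dhat (p : rule) (v : G -> R) (x : state) (g : G) : R :=
  v g * d_rate p x g.
Definition fitness (p : rule) (v : G -> R) (x : state) (g : G) : R :=
  v g - dhat p v x g + bhat p v x g.
Definition Delta_sel (p : rule) (v : G -> R) (x : state) : R :=
  \sum_(g : G) (x g)%:R * (bhat p v x g - dhat p v x g).

Definition Gi (ind : G -> I) (i : I) : {set G} := [set g | ind g == i].
Definition Xi (ind : G -> I) (x : state) (i : I) : R :=
  (#|Gi ind i|%:R)^-1 * \sum_(g in Gi ind i) (x g)%:R.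
Definition Vi (ind : G -> I) (v : G -> R) (i : I) : R :=
  \sum_(g in Gi ind i) v g.
Definition Wi (ind : G -> I) (p : rule) (v : G -> R) (x : state) (i : I) : R :=
  \sum_(g in Gi ind i) fitness p v x g.

Definition assumption3 (ind : G -> I) (p : rule) : Prop :=
  forall g h, ind g = ind h ->
  forall (x : state) (e : event), 0 < p x e -> in_R e g = in_R e h.

Definition same_R_sim (ind : G -> I) (e1 e2 : event) : bool :=
  [forall g, match e1 g, e2 g with
             | Some a, Some b => ind a == ind b
             | None, None => true
             | _, _ => false end].

Definition assumption4 (ind : G -> I) (p : rule) : Prop :=
  forall e1 e2 : event, same_R_sim ind e1 e2 -> forall x, p x e1 = p x e2.

End Defs.

(* Main.v *)
Require Import Defs.
From HB Require Import structures.
From mathcomp Require Import all_boot all_order all_algebra.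
Import Order.TTheory GRing.Theory Num.Theory.
Local Open Scope ring_scope.

Section Aux.
Variables (R : realFieldType) (G I : finType) (ind : G -> I) (p : rule R G).

Definition swapo (g g' : G) (o : option G) : option G :=
  if o == Some g then Some g' else if o == Some g' then Some g else o.

Lemma swapoK g g' : involutive (swapo g g').
Proof.
move=> o; rewrite /swapo.
case: (eqVneq o (Some g)) => [->|Hg]; first by rewrite eqxx; case: eqVneq => [[->]|].
case: (eqVneq o (Some g')) => [->|Hg']; first by rewrite eqxx.
by rewrite (negPf Hg) (negPf Hg').
Qed.

Definition swape (g g' h : G) (e : event G) : event G :=
  [ffun k => if k == h then swapo g g' (e k) else e k].

Lemma swapeK g g' h : involutive (swape g g' h).
Proof.
move=> e; apply/ffunP => k; rewrite /swape !ffunE.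
by case: eqP => // ->; rewrite swapoK.
Qed.

Lemma e_sim x g g' h : assumption4 ind p -> ind g = ind g' ->
  e_rate p x g h = e_rate p x g' h.
Proof.
move=> A4 Hgg'.
rewrite /e_rate (reindex_inj (can_inj (swapeK g g' h))) /=.
apply: eq_big => e.
  rewrite /swape ffunE (eqxx h) /swapo.
  case: (eqVneq (e h) (Some g)) => [->|Hg].
    by rewrite eq_sym.
  case: (eqVneq (e h) (Some g')) => [_|Hg']; first by rewrite eqxx.
  by rewrite (negPf Hg).
move=> _; apply: A4; apply/forallP => k; rewrite /swape ffunE.
case: eqP => [->|_]; last by case: (e k).
rewrite /swapo.
case: (eqVneq (e h) (Some g)) => [->|Hg]; first by rewrite Hgg'.
case: (eqVneq (e h) (Some g')) => [->|Hg']; first by rewrite Hgg'.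
by case: (e h).
Qed.

Lemma d_sum x g : d_rate p x g = \sum_(e | in_R e g) p x e.
Proof.
rewrite /d_rate /e_rate.
under eq_bigr => h _ do rewrite big_mkcond.
rewrite exchange_big [RHS]big_mkcond /=; apply: eq_bigr => e _.
rewrite /in_R; case: (e g) => [a|] /=.
  rewrite (bigD1 a) //= eqxx big1 ?addr0 // => h Hh.
  by case: eqP => // -[Ha]; rewrite Ha eqxx in Hh.
by rewrite big1.
Qed.

Lemma d_sim x g g' : is_replacement_rule p -> assumption3 ind p ->
  ind g = ind g' -> d_rate p x g = d_rate p x g'.
Proof.
move=> [P0 _] A3 H; rewrite !d_sum big_mkcond [RHS]big_mkcond.
apply: eq_bigr => e _.
have [Hp|] := ltP 0 (p x e); first by rewrite (A3 _ _ H x e Hp).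
move=> Hle; have -> : p x e = 0 by apply/le_anti; rewrite Hle P0.
by case: ifP; case: ifP.
Qed.

Lemma comp_fix (s : seq (event G)) h :
  (forall e, e \in s -> ~~ in_R e h) -> comp_events s h = h.
Proof.
elim: s => //= e s IH H.
rewrite /comp_events /= -/(comp_events s) IH; last first.
  by move=> e' He'; apply: H; rewrite inE He' orbT.
have := H e; rewrite inE eqxx /= => /(_ isT); rewrite /in_R negbK => /eqP.
by rewrite /ext_map => ->.
Qed.

Lemma d_pos x h : is_replacement_rule p -> fixation_axiom p -> 0 < d_rate p x h.
Proof.
move=> [P0 _] [g [s [_ Hpos [e1 He1 Hg] Hcomp]]].
have [e [Hes HR]] : exists e, e \in s /\ in_R e h.
  case: (eqVneq h g) => [->|Hne]; first by exists e1.
  case: (boolP [exists e in s, in_R e h]).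
    by move=> /existsP [e /andP [H1 H2]]; exists e.
  move=> /existsPn Hn; exfalso.
  have := Hcomp h; rewrite comp_fix => [Hh|e' He']; first by rewrite Hh eqxx in Hne.
  by have := Hn e'; rewrite He'.
rewrite d_sum (bigD1 e) //=.
apply: (lt_le_trans (Hpos e Hes x)); rewrite lerDl.
by apply: sumr_ge0 => ? _; apply: P0.
Qed.

End Aux.

Theorem proposition5 (R : realFieldType) (G I : finType) (ind : G -> I)
    (p : rule R G) (v : G -> R) :
  (0 < #|G|)%N ->
  (forall i : I, exists g : G, ind g = i) ->
  is_replacement_rule p ->
  fixation_axiom p ->
  assumption1 p ->
  assumption3 ind p ->
  assumption4 ind p ->
  reproductive_values p v ->
  forall x : state G,
    Delta_sel p v x = \sum_(i : I) Xi R ind x i * (Wi ind p v x i - Vi ind v i).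
Proof.
move=> _ Hex Hrule Hfix _ A3 A4 [Hv _] x.
have bsim y g g' : ind g = ind g' -> bhat p v y g = bhat p v y g'.
  by move=> H; apply: eq_bigr => h _; rewrite (@e_sim _ _ _ ind p y g g' h A4 H).
have vsim g g' : ind g = ind g' -> v g = v g'.
  move=> H; have Hd : d0 p g != 0 by rewrite gt_eqF //; apply: d_pos.
  apply: (mulfI Hd); rewrite Hv.
  have -> : d0 p g = d0 p g' by exact: (@d_sim _ _ _ ind p _ _ _ Hrule A3 H).
  rewrite Hv; exact: (bsim (statea G) g g' H).
pose c g := bhat p v x g - dhat p v x g.
have csim g g' : ind g = ind g' -> c g = c g'.
  move=> H; rewrite /c /dhat (bsim _ _ _ H) (vsim _ _ H) (@d_sim _ _ _ ind p _ _ _ Hrule A3 H).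
  by [].
rewrite /Delta_sel (partition_big ind predT) //=.
apply: eq_bigr => i _.
have [gi Hgi] := Hex i.
have Hin : gi \in Gi ind i by rewrite inE Hgi.
have HW : Wi ind p v x i - Vi ind v i = #|Gi ind i|%:R * c gi.
  rewrite /Wi /Vi -sumrB.
  rewrite (eq_bigr (fun=> c gi)); first by rewrite sumr_const mulr_natl.
  move=> g; rewrite inE => /eqP Hg; rewrite /fitness -(csim g) ?Hg // /c.
  by rewrite addrC !addrA addNr add0r addrC.
rewrite HW /Xi mulrCA !mulrA mulfV ?mul1r; last first.
  by rewrite pnatr_eq0 -lt0n; apply/card_gt0P; exists gi.
rewrite mulr_suml; apply: eq_big => g; first by rewrite inE.
by move=> /eqP Hg; rewrite -(csim g gi) // Hg.
Qed.
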